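(* Consider a symmetric two-player game $(X,\pi)$ with compact action set $X$ and payoff function of the form $\pi(x,y)=f(x)+g(y)+a(x,y)$ for some continuous functions $f,g:X\to\mathbb{R}$ and a symmetric function $a:X\times X\to\mathbb{R}$ (i.e. $a(x,y)=a(y,x)$ for all $x,y\in X$). Then imitation is essentially unbeatable.
   Context: $\pi(x,y)$ is the payoff of the player choosing $x$ against $y$ (assumed bounded). Relative payoff: $\Delta(x,y)=\pi(x,y)-\pi(y,x)$, and $\hat\Delta:=\max_{x,y\in X}\Delta(x,y)$. Imitate-the-best: given initial $y_0\in X$ and any opponent sequence $(x_t)_{t\ge0}$ in $X$, $y_t=x_{t-1}$ if $\Delta(x_{t-1},y_{t-1})>0$ and $y_t=y_{t-1}$ otherwise. Imitation is essentially unbeatable if for every $y_0\in X$ and every sequence $(x_t)$, $\limsup_{T\to\infty}\sum_{t=0}^T\Delta(x_t,y_t)\le\hat\Delta$. *)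

(* Defs.v *)
From HB Require Import structures.
From mathcomp Require Import all_boot all_order all_algebra.
From mathcomp Require Import all_classical all_reals all_analysis.
Set Implicit Arguments. Unset Strict Implicit. Unset Printing Implicit Defensive.
Import Order.TTheory GRing.Theory Num.Theory.
Local Open Scope ring_scope.
Local Open Scope classical_set_scope.

Section Imitation.
Variables (R : realType) (X : Type).

Definition relpay (pi : X -> X -> R) (x y : X) : R := pi x y - pi y x.

(* hat Delta = max_{x,y} Delta(x,y), rendered as the supremum (it is a max
   whenever the max exists, which is the paper's setting) *)
Definition hatDelta (pi : X -> X -> R) : R :=
  sup [set relpay pi x y | x in [set: X] & y in [set: X]].

Fixpoint imitate (pi : X -> X -> R) (y0 : X) (x : nat -> X) (t : nat) : X :=
  match t with
  | 0 => y0
  | t'.+1 => let yp := imitate pi y0 x t' in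
             if 0 < relpay pi (x t') yp then x t' else yp
  end.

Definition essentially_unbeatable (pi : X -> X -> R) : Prop :=
  forall (y0 : X) (x : nat -> X),
    (limn_esup (fun T : nat =>
       ((\sum_(0 <= t < T.+1) relpay pi (x t) (imitate pi y0 x t))%:E))
     <= (hatDelta pi)%:E)%E.
End Imitation.

(* Main.v *)
Require Import Defs.
From HB Require Import structures.
From mathcomp Require Import all_boot all_order all_algebra.
From mathcomp Require Import all_classical all_reals all_analysis.
From mathcomp Require Import lra.
Import Order.TTheory GRing.Theory Num.Theory numFieldNormedType.Exports.
Local Open Scope ring_scope.
Local Open Scope classical_set_scope.

Theorem corollary3 (R : realType) (X : topologicalType)
  (pi : X -> X -> R) (f g : X -> R) (a : X -> X -> R) :
  compact [set: X] ->
  continuous f -> continuous g ->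
  (forall x y, a x y = a y x) ->
  (forall x y, pi x y = f x + g y + a x y) ->
  (exists M : R, forall x y, `|pi x y| <= M) ->
  essentially_unbeatable pi.
Proof.
move=> _ _ _ asym hpi [M hM] y0 x.
pose h z := f z - g z.
have hrel u v : relpay pi u v = h u - h v.
  by rewrite /relpay !hpi asym /h; lra.
pose y := imitate pi y0 x.
have step t : relpay pi (x t) (y t) <= h (y t.+1) - h (y t).
  rewrite hrel /y /=; case: ifP; rewrite hrel.
    by move=> _; lra.
  by move=> /negbT; rewrite -leNgt; lra.
have tele T : \sum_(0 <= t < T) relpay pi (x t) (y t) <= h (y T) - h y0.
  elim: T => [|T IH]; first by rewrite big_geq //= subrr.
  rewrite big_nat_recr //=; have := step T; lra.
have bnd : has_ubound [set relpay pi u v | u in [set: X] & v in [set: X]].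
  exists (M + M) => _ [u _ [v _ <-]]; rewrite /relpay.
  have := hM u v; have := hM v u; rewrite !ler_norml; lra.
have ub T : \sum_(0 <= t < T) relpay pi (x t) (y t) <= hatDelta pi.
  apply: le_trans (tele T) _; rewrite -hrel.
  by apply: ub_le_sup => //; exists (y T) => //; exists y0.
rewrite limn_esup_lim; apply: lime_le; first exact: is_cvg_esups.
apply: nearW => n; apply: ub_ereal_sup => _ [m _ <-].
by rewrite lee_fin; apply: ub.
Qed.
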